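(* Let $C=V^{(q)}\cap\mathcal{F}^{\otimes n}W^{(q)}$ be a CSS code on $n$ qupits, with $V,W\le\mathbb{Z}_p^n$ linear and $V^\perp\subseteq W$, and let $B\subseteq\{1,\dots,n\}$. Suppose the state $\rho$ has fidelity 1 with $C_B=V_B^{(q)}\cap\mathcal{F}^{\otimes n}W_B^{(q)}$. Then $\rho$ can be written as $\rho=\sum_i p_i|\psi_i\rangle\langle\psi_i|$ with $|\psi_i\rangle=\sum_j c_{ij}E_j|\phi_{ij}\rangle$, where each $E_j$ is a Pauli operator whose support is contained in $B$ and each $|\phi_{ij}\rangle\in C$.
   Context: A qupit is $\mathbb{C}^p$ for a prime $p$, with basis $\{|a\rangle:a\in\mathbb{Z}_p\}$. Set $\omega=e^{2\pi i/p}$, $\mathcal{F}|a\rangle=\frac1{\sqrt p}\sum_b\omega^{ab}|b\rangle$, $X|a\rangle=|a+1\rangle$ and $Z|a\rangle=\omega^a|a\rangle$. Pauli operators on $n$ qupits are the tensor products $X^{\mathbf x}Z^{\mathbf z}$, and their support is the set of positions where they act non-trivially. For a linear code $U\le\mathbb{Z}_p^n$, let $U^{(q)}=\mathrm{span}\{|\mathbf u\rangle:\mathbf u\in U\}$. For $B\subseteq\{1,\dots,n\}$, let $V_B=\{\mathbf v\in\mathbb{Z}_p^n:\exists\mathbf w\in V\text{ with }\mathrm{supp}(\mathbf v-\mathbf w)\subseteq B\}$, and define $W_B$ analogously. *)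

(* Defs.v *)
From HB Require Import structures.
From mathcomp Require Import all_boot all_order all_algebra all_field.
Set Implicit Arguments. Unset Strict Implicit. Unset Printing Implicit Defensive.
Import Order.TTheory GRing.Theory Num.Theory.
Local Open Scope ring_scope.

Notation lab p n := 'rV['F_p]_n.
(* Pure (unnormalised) states of n qupits: functions lab -> C (amplitudes). *)
Definition qvec (p n : nat) := lab p n -> algC.
(* Operators: matrix kernels  A x y = <x|A|y>. *)
Definition qop (p n : nat) := lab p n -> lab p n -> algC.

(* omega = e^{2 pi i / p}: p.-root (-1) is e^{i pi / p} (root of -1 with
   minimal non-negative argument), its square is e^{2 pi i / p}. *)
Definition omega (p : nat) : algC := (p.-root (-1)) ^+ 2.

Definition dotp (p n : nat) (u v : lab p n) : 'F_p := \sum_(i < n) u 0 i * v 0 i.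
Definition omexp (p : nat) (a : 'F_p) : algC := omega p ^+ (val a).

Definition ket (p n : nat) (a : lab p n) : qvec p n := fun x => (x == a)%:R.

Definition fourier_ket (p n : nat) (a : lab p n) : qvec p n :=
  fun b => (sqrtC (p%:R))^-1 ^+ n * omexp (dotp a b).

Definition apply_op (p n : nat) (A : qop p n) (psi : qvec p n) : qvec p n :=
  fun x => \sum_y A x y * psi y.

(* Pauli X^x Z^z : |a> |-> omega^{z.a} |a + x> *)
Definition pauli (p n : nat) (x z : lab p n) : qop p n :=
  fun b a => (b == a + x)%:R * omexp (dotp z a).
Definition pauli_supp (p n : nat) (x z : lab p n) : {set 'I_n} :=
  [set i | (x 0 i != 0) || (z 0 i != 0)].

Definition in_span (p n : nat) (S : pred (lab p n)) (f : lab p n -> qvec p n)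
  (psi : qvec p n) : Prop :=
  exists c : lab p n -> algC, forall y, psi y = \sum_(u | S u) c u * f u y.

Definition qcode (p n : nat) (U : pred (lab p n)) (psi : qvec p n) : Prop :=
  in_span U (@ket p n) psi.
Definition fqcode (p n : nat) (U : pred (lab p n)) (psi : qvec p n) : Prop :=
  in_span U (@fourier_ket p n) psi.

Definition css (p n : nat) (V W : pred (lab p n)) (psi : qvec p n) : Prop :=
  qcode V psi /\ fqcode W psi.

Definition extB (p n : nat) (V : {vspace lab p n}) (B : {set 'I_n}) : pred (lab p n) :=
  fun v => [exists w : lab p n, (w \in V) && [forall i, (v 0 i != w 0 i) ==> (i \in B)]].

Definition inner (p n : nat) (phi psi : qvec p n) : algC := \sum_x (phi x)^* * psi x.

Definition density (p n : nat) (rho : qop p n) : Prop :=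
  (forall psi : qvec p n, 0 <= \sum_x \sum_y (psi x)^* * rho x y * psi y) /\
  \sum_x rho x x = 1.

(* fidelity of rho with a subspace S: Tr(Pi_S rho), Pi_S = sum_k |e_k><e_k|
   for an orthonormal basis (e_k) of S (the value does not depend on the basis) *)
Definition fidelity_one (p n : nat) (S : qvec p n -> Prop) (rho : qop p n) : Prop :=
  exists (m : nat) (e : 'I_m -> qvec p n),
    (forall k, S (e k)) /\
    (forall k l, inner (e k) (e l) = (k == l)%:R) /\
    (forall psi, S psi -> exists a : 'I_m -> algC, forall x, psi x = \sum_k a k * e k x) /\
    \sum_k \sum_x \sum_y (e k x)^* * rho x y * e k y = 1.

(* Main.v *)
Require Import Defs.
From HB Require Import structures.
From mathcomp Require Import all_boot all_order all_algebra all_field.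
Import Order.TTheory GRing.Theory Num.Theory.
Local Open Scope ring_scope.
From mathcomp Require Import ring.
Set Implicit Arguments. Unset Strict Implicit. Unset Printing Implicit Defensive.
Section Omega.
Variable p : nat.
Hypothesis hp : prime p.

Lemma p_gt1 : (1 < p)%N. Proof. exact: prime_gt1. Qed.
Lemma p_gt0 : (0 < p)%N. Proof. exact: prime_gt0. Qed.

Lemma omega_p : omega p ^+ p = 1.
Proof.
rewrite /omega -exprM mulnC exprM rootCK ?p_gt0 //.
by rewrite expr2 mulrNN mulr1.
Qed.

Lemma omega_neq1 : omega p != 1.
Proof.
apply/eqP => h.
have : (p.-root (-1 : algC) - 1) * (p.-root (-1 : algC) + 1) = 0.
  by rewrite mulrBl !mulrDr !mulr1 mul1r -expr2 -/(omega p) h (addrC 1) subrr.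
move/eqP; rewrite mulf_eq0 => /orP[]; last first.
  rewrite addr_eq0 => /eqP h1.
  have := @rootC_lt0 algC p (-1) p_gt1; rewrite h1.
  by rewrite oppr_lt0 ltr01.
rewrite subr_eq0 => /eqP h1.
have := @rootCK algC p p_gt0 (-1); rewrite h1 expr1n => /eqP.
by rewrite -subr_eq0 opprK -mulr2n pnatr_eq0.
Qed.

Lemma omega_prim : p.-primitive_root (omega p).
Proof.
have [m hm hdvd] := prim_order_exists p_gt0 omega_p.
have := hm; have /primeP [_ hdiv] := hp.
case/orP: (hdiv _ hdvd) => /eqP -> //.
move=> /prim_expr_order; rewrite expr1 => h; by move: omega_neq1; rewrite h eqxx.
Qed.

Lemma val_Fp_add (a b : 'F_p) : val (a + b) = ((val a + val b) %% p)%N.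
Proof.
have e : ((val a + val b)%:R : 'F_p) = a + b by rewrite natrD !natr_Zp.
rewrite -e; exact: val_Fp_nat.
Qed.

Lemma omexp_add (a b : 'F_p) : omexp (a + b) = omexp a * omexp b.
Proof. by rewrite /omexp val_Fp_add (expr_mod _ omega_p) exprD. Qed.

Lemma omexp0 : omexp (0 : 'F_p) = 1.
Proof. by rewrite /omexp expr0. Qed.

Lemma omexpN (a : 'F_p) : omexp (- a) = (omexp a)^-1.
Proof.
have h := omexp_add (-a) a; rewrite addNr omexp0 in h.
have nz : omexp a != 0.
  apply/eqP=> h0; move: h; rewrite h0 mulr0 => /eqP; by rewrite oner_eq0.
by apply: (mulIf nz); rewrite -h mulVf.
Qed.

Lemma omexp_eq1 (a : 'F_p) : (omexp a == 1) = (a == 0).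
Proof.
rewrite /omexp -(prim_order_dvd omega_prim).
apply/idP/eqP => [h|->]; last by rewrite dvdn0.
apply/val_inj => /=.
have lt : (val a < p)%N by rewrite -[X in (_ < X)%N](Fp_cast hp); exact: ltn_ord.
by move: h; rewrite /dvdn modn_small // => /eqP.
Qed.

Lemma omexp_neq0 (a : 'F_p) : omexp a != 0.
Proof.
apply/eqP=> h0; have := omexp_add (-a) a; rewrite addNr omexp0 h0 mulr0.
by move/eqP; rewrite oner_eq0.
Qed.
End Omega.
Section Dot.
Variables (p n : nat).
Implicit Types (u v w : 'rV['F_p]_n).

Lemma dotpDl u v w : dotp (u + v) w = dotp u w + dotp v w.
Proof. by rewrite /dotp -big_split /=; apply: eq_bigr => i _; rewrite mxE mulrDl. Qed.
Lemma dotpDr u v w : dotp u (v + w) = dotp u v + dotp u w.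
Proof. by rewrite /dotp -big_split /=; apply: eq_bigr => i _; rewrite mxE mulrDr. Qed.
Lemma dotpC u v : dotp u v = dotp v u.
Proof. by rewrite /dotp; apply: eq_bigr => i _; rewrite mulrC. Qed.
Lemma dotp0l v : dotp 0 v = 0.
Proof. by rewrite /dotp big1 // => i _; rewrite mxE mul0r. Qed.
Lemma dotp0r v : dotp v 0 = 0.
Proof. by rewrite dotpC dotp0l. Qed.
Lemma dotpNl u v : dotp (- u) v = - dotp u v.
Proof. by rewrite /dotp -sumrN; apply: eq_bigr => i _; rewrite mxE mulNr. Qed.
Lemma dotpNr u v : dotp u (- v) = - dotp u v.
Proof. by rewrite dotpC dotpNl dotpC. Qed.
Lemma dotpBl u v w : dotp (u - v) w = dotp u w - dotp v w.
Proof. by rewrite dotpDl dotpNl. Qed.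
Lemma dotpBr u v w : dotp u (v - w) = dotp u v - dotp u w.
Proof. by rewrite dotpDr dotpNr. Qed.

Lemma dotp_delta v (j : 'I_n) : dotp v (delta_mx 0 j) = v 0 j.
Proof.
rewrite /dotp (bigD1 j) //= big1 ?addr0 => [|i ij]; first by rewrite mxE !eqxx mulr1.
by rewrite mxE (negbTE ij) andbF mulr0.
Qed.

Lemma double_orth (V : {vspace 'rV['F_p]_n}) (a : 'rV['F_p]_n) : a \notin V ->
  exists t, (forall v, v \in V -> dotp v t = 0) /\ dotp t a != 0.
Proof.
move=> aV.
pose h (y : 'rV['F_p]_n) : 'rV['F_p]_n := y - projv V y.
have ha : h a != 0.
  apply: contra aV; rewrite /h subr_eq0 => /eqP ->; exact: memv_proj.
have [j hj] : exists j, h a 0 j != 0.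
  case: (pickP (fun j => h a 0 j != 0)) => [j hj|H]; first by exists j.
  suff : h a = 0 by move/eqP; rewrite (negbTE ha).
  apply/rowP => j; rewrite [RHS]mxE.
  by have := H j; rewrite /= => /negbFE/eqP.
pose t := \row_i (h (delta_mx 0 i)) 0 j.
have key : forall y, dotp y t = h y 0 j.
  move=> y; rewrite {2}(row_sum_delta y) /h.
  rewrite linear_sum /= -sumrB summxE /dotp; apply: eq_bigr => i _.
  by rewrite linearZ /= -scalerBr mxE [RHS]mxE.
exists t; split.
  move=> v vV; by rewrite key /h projv_id // subrr mxE.
by rewrite dotpC key.
Qed.
End Dot.
Section Char.
Variables (p n : nat).
Hypothesis hp : prime p.
Variable V : {vspace 'rV['F_p]_n}.

Definition perpV : pred 'rV['F_p]_n :=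
  fun t => [forall v, (v \in V) ==> (dotp v t == 0)].

Lemma perpVP t : reflect (forall v, v \in V -> dotp v t = 0) (perpV t).
Proof.
apply: (iffP forallP) => [H v vV|H v]; first by move/implyP/(_ vV)/eqP: (H v).
by apply/implyP => /H ->.
Qed.

Lemma perpV0 : perpV 0.
Proof. by apply/perpVP => v _; rewrite dotp0r. Qed.

Lemma perpVD t s : perpV s -> perpV (t + s) = perpV t.
Proof.
move/perpVP=> Hs; apply/perpVP/perpVP => H v vV.
  by have := H v vV; rewrite dotpDr Hs // addr0.
by rewrite dotpDr Hs // H // addr0.
Qed.

Lemma char_sum (a : 'rV['F_p]_n) :
  \sum_(t | perpV t) omexp (dotp t a) = (a \in V)%:R * #|perpV|%:R.
Proof.
case: (boolP (a \in V)) => aV.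
  rewrite mul1r (eq_bigr (fun _ => 1)) ?sumr_const //.
  by move=> t /perpVP H; rewrite dotpC H // omexp0.
rewrite mul0r.
have [t0 [/perpVP Pt0 nz]] := double_orth aV.
set S := (X in X = 0).
have : S = S * omexp (dotp t0 a).
  rewrite {1}/S (reindex_inj (addIr t0)) /= /S mulr_suml. apply: eq_big => [t|t _]; first by rewrite perpVD.
  by rewrite dotpDl omexp_add.
move/eqP; rewrite -subr_eq0 -{1}[S]mulr1 -mulrBr mulf_eq0 => /orP[/eqP //|].
by rewrite subr_eq0 eq_sym omexp_eq1 // (negbTE nz).
Qed.

Lemma card_perpV_neq0 : (#|perpV|%:R : algC) != 0.
Proof. by rewrite pnatr_eq0 -lt0n; apply/card_gt0P; exists 0; exact: perpV0. Qed.

Lemma indicV (a : 'rV['F_p]_n) :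
  (a \in V)%:R = (#|perpV|%:R)^-1 * \sum_(t | perpV t) omexp (dotp t a) :> algC.
Proof. by rewrite char_sum mulrCA mulVf ?card_perpV_neq0 ?mulr1. Qed.
End Char.
Section Codes.
Variables (p n : nat).
Hypothesis hp : prime p.
Local Notation L := ('rV['F_p]_n).

Definition fspan (U : pred L) (psi : qvec p n) : Prop :=
  exists c : L -> algC, forall y, psi y = \sum_(w | U w) c w * omexp (dotp w y).

Lemma Kf_neq0 : ((sqrtC (p%:R : algC))^-1 ^+ n) != 0.
Proof.
by rewrite expf_neq0 // invr_eq0 sqrtC_eq0 pnatr_eq0 -lt0n prime_gt0.
Qed.

Lemma fqcode_fspan (U : pred L) psi : fqcode U psi <-> fspan U psi.
Proof.
set K := ((sqrtC (p%:R : algC))^-1 ^+ n).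
split => [[c hc]|[c hc]].
  exists (fun w => c w * K) => y; rewrite hc; apply: eq_bigr => w _.
  by rewrite /fourier_ket -/K mulrA.
exists (fun w => c w * K^-1) => y; rewrite hc; apply: eq_bigr => w _.
by rewrite /fourier_ket -/K mulrA -(mulrA (c w)) mulVf ?Kf_neq0 // mulr1.
Qed.

Lemma qcode_supp (U : pred L) psi : qcode U psi <-> (forall y, ~~ U y -> psi y = 0).
Proof.
split => [[c hc] y Uy|H].
  rewrite hc big1 // => u Uu; rewrite /ket.
  case: eqP => [e|]; last by rewrite mulr0.
  by move: Uy; rewrite e Uu.
exists psi => y; rewrite /ket.
case: (boolP (U y)) => Uy.
  rewrite (bigD1 y) //= eqxx mulr1 big1 ?addr0 // => u /andP[_ uy].
  by rewrite eq_sym (negbTE uy) mulr0.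
rewrite H // big1 // => u Uu; case: eqP => [e|]; last by rewrite mulr0.
by move: Uy; rewrite e Uu.
Qed.

Lemma fspan_ext (U : pred L) (f g : qvec p n) : (forall y, f y = g y) -> fspan U g -> fspan U f.
Proof. by move=> e [c hc]; exists c => y; rewrite e hc. Qed.

Lemma fspan_scale (U : pred L) k (f : qvec p n) : fspan U f -> fspan U (fun y => k * f y).
Proof.
move=> [c hc]; exists (fun w => k * c w) => y; rewrite hc mulr_sumr.
by apply: eq_bigr => w _; rewrite mulrA.
Qed.

Lemma fspan_sum (U : pred L) (I : finType) (P : pred I) (F : I -> qvec p n) :
  (forall i, P i -> fspan U (F i)) -> fspan U (fun y => \sum_(i | P i) F i y).
Proof.
move=> H.
have : forall i, exists c : L -> algC, P i ->
    forall y, F i y = \sum_(w | U w) c w * omexp (dotp w y).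
  move=> i; case: (boolP (P i)) => Pi; last by exists (fun _ => 0).
  by have [c hc] := H i Pi; exists c.
case/fin_all_exists => c hc.
exists (fun w => \sum_(i | P i) c i w) => y.
rewrite (eq_bigr (fun i => \sum_(w | U w) c i w * omexp (dotp w y))); last first.
  by move=> i Pi; rewrite hc.
rewrite exchange_big /=; apply: eq_bigr => w _; by rewrite mulr_suml.
Qed.

Lemma fspan_one (U : pred L) : U 0 -> fspan U (fun _ => 1).
Proof.
move=> U0; exists (fun w => (w == 0)%:R) => y.
rewrite (bigD1 0) //= eqxx mul1r dotp0l omexp0 big1 ?addr0 // => w /andP[_ w0].
by rewrite (negbTE w0) mul0r.
Qed.

Lemma fspan_char (U : pred L) (hU : forall w t, U t -> U (w + t) = U w) t (Ut : U t)
  (f : qvec p n) : fspan U f -> fspan U (fun y => omexp (dotp t y) * f y).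
Proof.
move=> [c hc]; exists (fun w => c (w - t)) => y.
rewrite hc mulr_sumr [RHS](reindex_inj (addIr t)) /=.
apply: eq_big => [w|w _]; first by rewrite hU.
by rewrite addrK dotpDl omexp_add // mulrCA (mulrC (omexp _)).  
Qed.
End Codes.
Section Supp.
Variables (p n : nat).
Hypothesis hp : prime p.
Variable B : {set 'I_n}.
Local Notation L := ('rV['F_p]_n).

Definition FB (x : L) : bool := [forall i, (i \notin B) ==> (x 0 i == 0)].
Definition mask (x : L) : L := \row_i (if i \in B then x 0 i else 0).

Lemma FBP (x : L) : reflect (forall i, i \notin B -> x 0 i = 0) (FB x).
Proof.
apply: (iffP forallP) => [H i iB|H i]; first by move/implyP/(_ iB)/eqP: (H i).
by apply/implyP => /H ->.
Qed.

Lemma FB0 : FB 0.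
Proof. by apply/FBP => i _; rewrite mxE. Qed.

Lemma FBD (x x0 : L) : FB x0 -> FB (x + x0) = FB x.
Proof.
move/FBP => H0; apply/FBP/FBP => H i iB.
  by have := H i iB; rewrite mxE H0 // addr0.
by rewrite mxE H0 // H // addr0.
Qed.

Lemma mask_id (x : L) : FB x -> mask x = x.
Proof.
move/FBP=> H; apply/rowP => i; rewrite mxE.
by case: (boolP (i \in B)) => // iB; rewrite H.
Qed.

Lemma supp_mask (x z : L) : pauli_supp (mask x) (mask z) \subset B.
Proof.
apply/subsetP => i; rewrite inE !mxE.
by case: (i \in B) => //; rewrite eqxx.
Qed.

Lemma count_shift (U : {vspace L}) (y : L) : extB U B y ->
  \sum_(x | FB x) ((y - x) \in U)%:R = \sum_(x | FB x) (x \in U)%:R :> algC.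
Proof.
case/existsP => w /andP[wU /forallP Hw].
have Fx0 : FB (y - w).
  apply/FBP => i iB; rewrite !mxE; apply/eqP; rewrite subr_eq0.
  by apply: contraR iB => ne; move/implyP: (Hw i); apply.
rewrite (reindex_inj (addIr (y - w))) /=.
apply: eq_big => [x|x _]; first by rewrite FBD.
have -> : y - (x + (y - w)) = w - x by rewrite opprD opprB addrCA (addrC w) addNKr addrC.
by rewrite rpredBl.
Qed.

Lemma N_neq0 (U : {vspace L}) : \sum_(x | FB x) (x \in U)%:R != 0 :> algC.
Proof.
rewrite (bigD1 0) ?FB0 //= mem0v.
rewrite -natr_sum -natrD pnatr_eq0 //.
Qed.

Lemma apply_op_pauli (x z : L) (phi : qvec p n) (b : L) :
  apply_op (pauli x z) phi b = omexp (dotp z (b - x)) * phi (b - x).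
Proof.
rewrite /apply_op /pauli (bigD1 (b - x)) //= subrK eqxx mul1r big1 ?addr0 //.
move=> a ab; case: eqP => [e|]; last by rewrite mul0r mul0r.
by move: ab; rewrite e addrK eqxx.
Qed.
End Supp.
Section Decomp.
Variables (p n : nat).
Hypothesis hp : prime p.
Variable B : {set 'I_n}.
Local Notation L := ('rV['F_p]_n).
Variables V W : {vspace L}.
Hypothesis hperp : forall v : L, (forall u, u \in V -> dotp u v = 0) -> v \in W.

Lemma hUW : forall (w t : L), (fun u => u \in W) t ->
   (fun u => u \in W) (w + t) = (fun u => u \in W) w.
Proof. by move=> w t /= tW; rewrite rpredDr. Qed.

Lemma fspan_chi (t : L) : t \in W -> fspan (fun u => u \in W) (fun a => omexp (dotp t a)).
Proof.
move=> tW; apply: (fspan_ext (g := fun a => omexp (dotp t a) * 1)).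
  by move=> a; rewrite mulr1.
apply: fspan_char => //; first exact: hUW.
by apply: fspan_one; rewrite /= mem0v.
Qed.

Lemma fspan_maskV (g : qvec p n) : fspan (fun u => u \in W) g ->
  fspan (fun u => u \in W) (fun a => (a \in V)%:R * g a).
Proof.
move=> hg.
apply: (fspan_ext (g := fun a => (#|perpV V|%:R)^-1 *
    \sum_(t | perpV V t) (omexp (dotp t a) * g a))).
  by move=> a; rewrite (indicV hp V a) -mulrA mulr_suml.
apply: fspan_scale; apply: fspan_sum => t /perpVP Pt.
apply: fspan_char => //; first exact: hUW.
by apply: hperp.
Qed.

Lemma decomp (psi : qvec p n) :
  css (extB V B) (extB W B) psi ->
  exists phi : L * L -> qvec p n,
    (forall e, css (fun u => u \in V) (fun w => w \in W) (phi e)) /\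
    forall y, psi y = \sum_(e : L * L)
        apply_op (pauli (mask B e.1) (mask B e.2)) (phi e) y.
Proof.
rewrite /css; case=> /qcode_supp hq /(fqcode_fspan hp) [d hd].
set NV : algC := \sum_(x | FB B x) (x \in V)%:R.
set NW : algC := \sum_(x | FB B x) (x \in W)%:R.
pose G (z : L) (a : L) :=
  \sum_(w | extB W B w && (w - z \in W)) d w * omexp (dotp w a).
pose phi (e : L * L) (a : L) := if FB B e.1 && FB B e.2 then
   NV^-1 * NW^-1 * ((a \in V)%:R * (omexp (- dotp e.2 a) * G e.2 (a + e.1)))
   else 0.
exists phi; split.
  move=> [x z]; split.
    apply/qcode_supp => a aV; rewrite /phi; case: ifP => // _.
    by rewrite (negbTE aV) mul0r mulr0.
  apply/(fqcode_fspan hp); rewrite /phi /=; case: (FB B x && FB B z); last first.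
    by exists (fun _ => 0) => y; rewrite big1 // => w _; rewrite mul0r.
  apply: fspan_scale; apply: fspan_maskV.
  apply: (fspan_ext (g := fun a => \sum_(w | extB W B w && (w - z \in W))
       (d w * omexp (dotp w x)) * omexp (dotp (w - z) a))).
    move=> a; rewrite /G mulr_sumr; apply: eq_bigr => w _.
    rewrite dotpDr dotpBl omexp_add // omexp_add // omexpN //.
    ring.
  apply: fspan_sum => w /andP[_ wz]; apply: fspan_scale; exact: fspan_chi.
move=> y.
have NV0 : NV != 0 by exact: N_neq0.
have NW0 : NW != 0 by exact: N_neq0.
pose T x z : algC := if FB B x && FB B z then
   NV^-1 * NW^-1 * ((y - x \in V)%:R * G z y) else 0.
have hT : forall e : L * L,
    apply_op (pauli (mask B e.1) (mask B e.2)) (phi e) y = T e.1 e.2.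
  move=> [x z] /=; rewrite /T /phi /=.
  case: ifP => [/andP[Fx Fz]|_]; last by rewrite apply_op_pauli mulr0.
  rewrite !mask_id // apply_op_pauli // subrK omexpN //.
  set o := omexp _.
  have o0 : o != 0 by exact: omexp_neq0.
  by field; rewrite NW0 NV0 o0.
rewrite (eq_bigr (fun e => T e.1 e.2)) //.
have -> : \sum_(e : L * L) T e.1 e.2 =
   \sum_(e : L * L | predT e.1 && predT e.2) T e.1 e.2 by apply: eq_bigl.
rewrite -pair_big /=.
have -> : \sum_i \sum_j T i j = NV^-1 * NW^-1 *
    ((\sum_(x | FB B x) (y - x \in V)%:R) * (\sum_(z | FB B z) G z y)).
  rewrite big_distrlr mulr_sumr [RHS]big_mkcond /=; apply: eq_bigr => x _.
  rewrite /T; case: (FB B x) => /=; last by rewrite big1.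
  rewrite mulr_sumr [RHS]big_mkcond /=; apply: eq_bigr => z _.
  by case: (FB B z).
have hGs : \sum_(z | FB B z) G z y = NW * psi y.
  rewrite /G (eq_bigr (fun z => \sum_(w | extB W B w)
      ((w - z \in W)%:R * (d w * omexp (dotp w y))))); last first.
    move=> z _; rewrite big_mkcondr /=; apply: eq_bigr => w _.
    by case: (w - z \in W); rewrite ?mul1r ?mul0r.
  rewrite exchange_big /= hd mulr_sumr; apply: eq_bigr => w Ww.
  by rewrite -mulr_suml count_shift.
rewrite hGs.
case: (boolP (extB V B y)) => Vy.
  rewrite count_shift // -/NV; by field; rewrite NW0 NV0.
by rewrite hq // !mulr0.
Qed.
End Decomp.
Section Herm.
Variable T : finType.
Variable A : T -> T -> algC.
Hypothesis hA : forall psi : T -> algC, 0 <= \sum_x \sum_y (psi x)^* * A x y * psi y.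

Definition Qf (f g : T -> algC) := \sum_x \sum_y (f x)^* * A x y * g y.

Lemma QfDl f1 f2 g : Qf (fun x => f1 x + f2 x) g = Qf f1 g + Qf f2 g.
Proof.
rewrite /Qf -big_split /=; apply: eq_bigr => x _; rewrite -big_split /=.
by apply: eq_bigr => y _; rewrite rmorphD /= mulrDl mulrDl.
Qed.
Lemma QfDr f g1 g2 : Qf f (fun x => g1 x + g2 x) = Qf f g1 + Qf f g2.
Proof.
rewrite /Qf -big_split /=; apply: eq_bigr => x _; rewrite -big_split /=.
by apply: eq_bigr => y _; rewrite mulrDr.
Qed.
Lemma QfZl c f g : Qf (fun x => c * f x) g = c^* * Qf f g.
Proof.
rewrite /Qf mulr_sumr; apply: eq_bigr => x _; rewrite mulr_sumr.
by apply: eq_bigr => y _; rewrite rmorphM /= !mulrA.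
Qed.
Lemma QfZr c f g : Qf f (fun x => c * g x) = c * Qf f g.
Proof.
rewrite /Qf mulr_sumr; apply: eq_bigr => x _; rewrite mulr_sumr.
by apply: eq_bigr => y _; rewrite mulrCA.
Qed.

Definition dlt (x : T) : T -> algC := fun a => (a == x)%:R.

Lemma Qf_dlt x y : Qf (dlt x) (dlt y) = A x y.
Proof.
rewrite /Qf (bigD1 x) //= [X in _ + X]big1 ?addr0 => [|a ax]; last first.
  by rewrite big1 // => b _; rewrite /dlt (negbTE ax) rmorph0 !mul0r.
rewrite (bigD1 y) //= [X in _ + X]big1 ?addr0 => [|b hb]; last by rewrite /dlt (negbTE hb) mulr0.
by rewrite /dlt !eqxx rmorph1 mul1r mulr1.
Qed.

Lemma Qf_real f : (Qf f f)^* = Qf f f.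
Proof. by apply: conj_Creal; apply: ger0_real; apply: hA. Qed.

Lemma Qf_pair x y c : Qf (fun a => dlt x a + c * dlt y a) (fun a => dlt x a + c * dlt y a)
  = A x x + c * A x y + c^* * A y x + c^* * c * A y y.
Proof.
rewrite QfDl !QfDr !QfZl !QfZr !Qf_dlt.
by rewrite mulrA addrA.
Qed.

Lemma herm x y : (A y x)^* = A x y.
Proof.
have rx : (A x x)^* = A x x by rewrite -Qf_dlt Qf_real.
have ry : (A y y)^* = A y y by rewrite -Qf_dlt Qf_real.
case: (eqVneq x y) => [<- //|nxy].
have e1 := Qf_real (fun a => dlt x a + 1 * dlt y a).
have e2 := Qf_real (fun a => dlt x a + 'i * dlt y a).
rewrite Qf_pair in e1; rewrite Qf_pair in e2.
move: e1 e2; rewrite !rmorphD !rmorphM /= rx ry conjCi !rmorph1 rmorphN /= conjCi opprK.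
set a := A x y; set b := A y x; set c := A x x; set d := A y y => e1 e2.
have h : 2%:R * 'i * (a^* - b) =
   ((c + 'i * a + - 'i * b + - 'i * 'i * d) - (c + - 'i * a^* + 'i * b^* + 'i * - 'i * d))
   + 'i * ((c + 1 * a^* + 1 * b^* + 1 * 1 * d) - (c + 1 * a + 1 * b + 1 * 1 * d)).
  ring.
move: h; rewrite e1 e2 !subrr mulr0 addr0 => /eqP; rewrite !mulf_eq0 pnatr_eq0 /=.
rewrite (negbTE (neq0Ci _)) /= subr_eq0 => /eqP ea.
by rewrite -ea conjCK.
Qed.
End Herm.
Section Spec.
Local Open Scope sesquilinear_scope.
Variable T : finType.
Variable A : T -> T -> algC.
Hypothesis hA : forall psi : T -> algC, 0 <= \sum_x \sum_y (psi x)^* * A x y * psi y.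

Lemma spectral_decomp : exists (N : nat) (d : 'I_N -> algC) (u : 'I_N -> T -> algC),
  [/\ forall k, 0 <= d k,
      forall k l, \sum_x (u k x)^* * u l x = (k == l)%:R &
      forall x y, A x y = \sum_k d k * u k x * (u k y)^*].
Proof.
pose N := #|T|.
pose M : 'M[algC]_N := \matrix_(i, j) A (enum_val i) (enum_val j).
have hM : M \is normalmx.
  apply/normalmxP; have -> // : M ^t* = M.
  by apply/matrixP => i j; rewrite !mxE (herm hA).
have eM := orthomx_spectralP hM.
set P := spectralmx M in eM; set D := spectral_diag M in eM.
have uP : P \is unitarymx by exact: spectral_unitarymx.
rewrite invmx_unitary // in eM.
pose u (k : 'I_N) (x : T) := (P k (enum_rank x))^*.
have hdec : forall x y, A x y = \sum_k D 0 k * u k x * (u k y)^*.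
  move=> x y.
  have -> : A x y = M (enum_rank x) (enum_rank y) by rewrite mxE !enum_rankK.
  rewrite eM mxE; apply: eq_bigr => k _.
  rewrite mul_mx_diag !mxE conjCK /u; ring.
have horth : forall k l, \sum_x (u k x)^* * u l x = (k == l)%:R.
  move=> k l.
  have := congr1 (fun X : 'M_N => X k l) (unitarymxP uP).
  rewrite /= !mxE => <-.
  rewrite (reindex (@enum_rank T)) /=; last first.
    by apply: onW_bij; exact: enum_rank_bij.
  by apply: eq_bigr => x _; rewrite /u conjCK !mxE.
exists N, (fun k => D 0 k), u; split => //.
move=> k.
have -> : D 0 k = \sum_x \sum_y (u k x)^* * A x y * u k y.
  transitivity (\sum_x \sum_y \sum_l
     D 0 l * (((u k x)^* * u l x) * ((u l y)^* * u k y))); last first.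
    apply: eq_bigr => x _; apply: eq_bigr => y _.
    rewrite hdec mulr_sumr mulr_suml; apply: eq_bigr => l _; ring.
  under eq_bigr do rewrite exchange_big.
  rewrite exchange_big /=.
  rewrite (eq_bigr (fun l => D 0 l * ((k == l)%:R * (l == k)%:R))); last first.
    move=> l _; rewrite -horth -horth big_distrlr mulr_sumr; apply: eq_bigr => x _.
    by rewrite mulr_sumr.
  rewrite (bigD1 k) //= eqxx mulr1 mulr1 big1 ?addr0 // => l lk.
  by rewrite eq_sym (negbTE lk) mul0r mulr0.
exact: hA.
Qed.
End Spec.
Section Lin.
Variables (p n : nat).
Hypothesis hp : prime p.
Local Notation L := ('rV['F_p]_n).

Lemma css_lin (U1 U2 : pred L) (m : nat) (e : 'I_m -> qvec p n) (c : 'I_m -> algC)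
  (v : qvec p n) : (forall k, css U1 U2 (e k)) -> (forall x, v x = \sum_k c k * e k x) ->
  css U1 U2 v.
Proof.
move=> he hv; split.
  apply/qcode_supp => y Uy; rewrite hv big1 // => k _.
  by have [/qcode_supp -> // _] := he k; rewrite mulr0.
apply/(fqcode_fspan hp); apply: (fspan_ext (g := fun x => \sum_k c k * e k x)) => //.
apply: fspan_sum => k _; apply: fspan_scale.
by have [_ /(fqcode_fspan hp)] := he k.
Qed.

Lemma bessel (T : finType) (m : nat) (e : 'I_m -> T -> algC) (a : T -> algC)
  (horth : forall k l, \sum_x (e k x)^* * e l x = (k == l)%:R) :
  let c k := \sum_x (e k x)^* * a x in
  \sum_x (a x - \sum_k c k * e k x)^* * (a x - \sum_k c k * e k x) =
  \sum_x (a x)^* * a x - \sum_k (c k)^* * c k.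
Proof.
move=> c.
have h1 : \sum_x (a x)^* * (\sum_k c k * e k x) = \sum_k (c k)^* * c k.
  rewrite (eq_bigr (fun x => \sum_k c k * ((a x)^* * e k x))); last first.
    by move=> x _; rewrite mulr_sumr; apply: eq_bigr => k _; rewrite mulrCA.
  rewrite exchange_big /=; apply: eq_bigr => k _.
  rewrite -mulr_sumr mulrC /c rmorph_sum /=; congr (_ * _).
  by apply: eq_bigr => x _; rewrite rmorphM /= conjCK mulrC.
have h2 : \sum_x (\sum_k c k * e k x)^* * a x = \sum_k (c k)^* * c k.
  rewrite (eq_bigr (fun x => \sum_k (c k)^* * ((e k x)^* * a x))); last first.
    move=> x _; rewrite rmorph_sum mulr_suml; apply: eq_bigr => k _.
    by rewrite rmorphM /= mulrA.
  by rewrite exchange_big /=; apply: eq_bigr => k _; rewrite -mulr_sumr.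
have h3 : \sum_x (\sum_k c k * e k x)^* * (\sum_k c k * e k x) = \sum_k (c k)^* * c k.
  rewrite (eq_bigr (fun x => \sum_k \sum_l (c k)^* * c l * ((e k x)^* * e l x))); last first.
    move=> x _; rewrite rmorph_sum big_distrlr /=; apply: eq_bigr => k _.
    apply: eq_bigr => l _; rewrite rmorphM /=; ring.
  rewrite exchange_big /=; apply: eq_bigr => k _.
  rewrite exchange_big /= (bigD1 k) //= -mulr_sumr horth eqxx mulr1 big1 ?addr0 //.
  by move=> l lk; rewrite -mulr_sumr horth eq_sym (negbTE lk) mulr0.
rewrite (eq_bigr (fun x => (a x)^* * a x - (a x)^* * (\sum_k c k * e k x) -
   (\sum_k c k * e k x)^* * a x + (\sum_k c k * e k x)^* * (\sum_k c k * e k x))); last first.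
  by move=> x _; rewrite rmorphB /=; ring.
rewrite big_split /= !sumrB h1 h2 h3; ring.
Qed.
End Lin.
Unset Implicit Arguments.
Theorem mainTheorem2 (p n : nat) (hp : prime p)
  (V W : {vspace 'rV['F_p]_n})
  (hperp : forall v : 'rV['F_p]_n,
      (forall u, u \in V -> dotp u v = 0) -> v \in W)
  (B : {set 'I_n}) (rho : qop p n)
  (hrho : density rho)
  (hfid : fidelity_one (css (extB V B) (extB W B)) rho) :
  exists (k : nat) (pr : 'I_k -> algC) (psi : 'I_k -> qvec p n)
         (m : nat) (E : 'I_m -> 'rV['F_p]_n * 'rV['F_p]_n)
         (c : 'I_k -> 'I_m -> algC) (phi : 'I_k -> 'I_m -> qvec p n),
    [/\ forall i, 0 <= pr i,
        \sum_i pr i = 1,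
        forall i, inner (psi i) (psi i) = 1 &
    [/\ forall j, pauli_supp (E j).1 (E j).2 \subset B,
        forall i j, css (fun u => u \in V) (fun w => w \in W) (phi i j),
        forall i x, psi i x = \sum_j c i j * apply_op (pauli (E j).1 (E j).2) (phi i j) x
      & forall x y, rho x y = \sum_i pr i * psi i x * (psi i y)^*]].
Proof.
case: hrho => hpsd htr.
case: hfid => m [e [he [horthe [_ hsum]]]].
case: m e he horthe hsum => [|m] e he horthe hsum.
  by move: hsum; rewrite big_ord0 => /eqP; rewrite eq_sym oner_eq0.
have [N [d [u [hd0 horth hdec]]]] := spectral_decomp hpsd.
have htr' : \sum_i d i = 1.
  rewrite -htr (eq_bigr (fun x => \sum_i d i * ((u i x)^* * u i x))); last first.
    by move=> x _; rewrite hdec; apply: eq_bigr => i _; ring.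
  rewrite exchange_big /=; apply: eq_bigr => i _; by rewrite -mulr_sumr horth eqxx mulr1.
pose cc i k := \sum_x (e k x)^* * u i x.
pose f i := \sum_k (cc i k)^* * cc i k.
have hfs : \sum_i d i * f i = 1.
  rewrite -hsum; symmetry.
  transitivity (\sum_k \sum_i d i * (cc i k * (cc i k)^*)); last first.
    rewrite exchange_big /=; apply: eq_bigr => i _; rewrite /f mulr_sumr.
    by apply: eq_bigr => k _; rewrite (mulrC (cc i k)).
  apply: eq_bigr => k _.
  transitivity (\sum_x \sum_y \sum_i d i * (((e k x)^* * u i x) * ((u i y)^* * e k y))).
    apply: eq_bigr => x _; apply: eq_bigr => y _.
    rewrite hdec mulr_sumr mulr_suml; apply: eq_bigr => i _; ring.
  under eq_bigr do rewrite exchange_big.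
  rewrite exchange_big /=; apply: eq_bigr => i _.
  have -> : (cc i k)^* = \sum_y (u i y)^* * e k y.
    rewrite /cc rmorph_sum; apply: eq_bigr => y _; by rewrite rmorphM /= conjCK mulrC.
  rewrite big_distrlr mulr_sumr; apply: eq_bigr => x _.
  by rewrite mulr_sumr.
pose v i x := u i x - \sum_k cc i k * e k x.
have hbes : forall i, \sum_x (v i x)^* * v i x = 1 - f i.
  by move=> i; rewrite /v (bessel _ horthe) horth eqxx.
have hnn : forall i, 0 <= 1 - f i.
  move=> i; rewrite -hbes; apply: sumr_ge0 => x _; rewrite mulrC; exact: mul_conjC_ge0.
have hz : \sum_i d i * (1 - f i) = 0.
  by rewrite (eq_bigr (fun i => d i - d i * f i)) ?sumrB ?htr' ?hfs ?subrr //
     => i _; rewrite mulrBr mulr1.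
have hz' : forall i, d i * (1 - f i) = 0.
  move=> i; apply: (psumr_eq0P _ hz) => // j _.
  exact: mulr_ge0.
have hS : forall i, d i != 0 -> css (extB V B) (extB W B) (u i).
  move=> i di; apply: (css_lin hp (c := cc i) he) => x.
  have h0 : \sum_x (v i x)^* * v i x = 0.
    by rewrite hbes; move: (hz' i) => /eqP; rewrite mulf_eq0 (negbTE di) => /eqP.
  have hge : forall x, true -> 0 <= (v i x)^* * v i x.
    by move=> y _; rewrite mulrC mul_conjC_ge0.
  have : (v i x)^* * v i x = 0 by apply: (psumr_eq0P hge h0).
  by move/eqP; rewrite mulrC mul_conjC_eq0 /v subr_eq0 => /eqP.
pose psi i := if d i == 0 then e ord0 else u i.
have hpsiS : forall i, css (extB V B) (extB W B) (psi i).
  by move=> i; rewrite /psi; case: eqP => [_|/eqP di]; [exact: he | exact: hS].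
have hpsin : forall i, inner (psi i) (psi i) = 1.
  move=> i; rewrite /psi; case: eqP => _; first by rewrite horthe eqxx.
  by rewrite /inner horth eqxx.
have hrho' : forall x y, rho x y = \sum_i d i * psi i x * (psi i y)^*.
  move=> x y; rewrite hdec; apply: eq_bigr => i _; rewrite /psi.
  by case: eqP => [->|]; rewrite ?mul0r.
have : forall i, exists phi : 'rV['F_p]_n * 'rV['F_p]_n -> qvec p n,
    (forall e, css (fun u => u \in V) (fun w => w \in W) (phi e)) /\
    forall y, psi i y = \sum_(e : 'rV['F_p]_n * 'rV['F_p]_n)
        apply_op (pauli (mask B e.1) (mask B e.2)) (phi e) y.
  by move=> i; apply: decomp => //; exact: hpsiS.
case/fin_all_exists => Phi hPhi.
exists N, d, psi, #|{: 'rV['F_p]_n * 'rV['F_p]_n}|,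
  (fun j => (mask B (enum_val j).1, mask B (enum_val j).2)), (fun _ _ => 1),
  (fun i j => Phi i (enum_val j)).
split => //; split => //.
- by move=> j; exact: supp_mask.
- by move=> i j; case: (hPhi i) => H _; exact: H.
move=> i x; case: (hPhi i) => _ ->.
rewrite (big_enum_val (A := {: 'rV['F_p]_n * 'rV['F_p]_n})) /=.
by apply: eq_bigr => j _; rewrite mul1r.
Qed.
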